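(* Let $d,r,s$ be positive integers. Let $G$ be a soluble group of derived length $d$ generated by a set $X$ such that every element of $X$ has finite order dividing $r$ and has at most $s$ conjugates in $G$. Then $G$ has finite exponent bounded by a function of $d,r,s$ only. *)

(* Defs.v *)
From Stdlib Require Import List Arith.
Set Implicit Arguments.

Record Group := MkGroup {
  carrier :> Type;
  gmul : carrier -> carrier -> carrier;
  ginv : carrier -> carrier;
  gone : carrier;
  gmul_assoc : forall x y z, gmul x (gmul y z) = gmul (gmul x y) z;
  gmul_1l : forall x, gmul gone x = x;
  gmul_Vl : forall x, gmul (ginv x) x = gone
}.

Section GroupDefs.
Variable G : Group.

Fixpoint gpow (x : G) (n : nat) : G :=
  match n with O => gone G | S m => gmul G x (gpow x m) end.

Definition subgroup (H : G -> Prop) : Prop :=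
  H (gone G) /\ (forall x y, H x -> H y -> H (gmul G x y))
  /\ (forall x, H x -> H (ginv G x)).

Definition gen (S : G -> Prop) : G -> Prop :=
  fun x => forall H, subgroup H -> (forall y, S y -> H y) -> H x.

Definition comm (a b : G) : G :=
  gmul G (gmul G (ginv G a) (ginv G b)) (gmul G a b).

Definition derived (H : G -> Prop) : G -> Prop :=
  gen (fun x => exists a b, H a /\ H b /\ x = comm a b).

Fixpoint derived_series (n : nat) : G -> Prop :=
  match n with
  | O => fun _ => True
  | S m => derived (derived_series m)
  end.

Definition trivial_sub (H : G -> Prop) : Prop := forall x, H x -> x = gone G.

Definition soluble_of_derived_length (d : nat) : Prop :=
  trivial_sub (derived_series d) /\
  (forall n, n < d -> ~ trivial_sub (derived_series n)).

Definition generated_by (X : G -> Prop) : Prop := forall g, gen X g.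

Definition conjg (x g : G) : G := gmul G (gmul G (ginv G g) x) g.

Definition at_most_conjugates (x : G) (s : nat) : Prop :=
  exists l : list G, length l <= s /\ forall g, In (conjg x g) l.

Definition has_exponent (e : nat) : Prop :=
  0 < e /\ (forall g : G, gpow g e = gone G) /\
  (forall n, 0 < n -> (forall g : G, gpow g n = gone G) -> e <= n).

End GroupDefs.

(* Main.v *)
Require Import Defs.
From Stdlib Require Import List Arith Lia Classical ClassicalDescription.
Import ListNotations.

Section GL.
Variable G : Group.
Local Notation "x · y" := (gmul G x y) (at level 40, left associativity).
Local Notation e := (gone G).
Local Notation inv := (ginv G).

Lemma mulA (x y z : G) : x · (y · z) = x · y · z. Proof. apply gmul_assoc. Qed.
Lemma mul1l (x : G) : e · x = x. Proof. apply gmul_1l. Qed.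
Lemma mulVl (x : G) : inv x · x = e. Proof. apply gmul_Vl. Qed.
Lemma mulVr (x : G) : x · inv x = e.
Proof.
  rewrite <- (mul1l (x · inv x)).
  rewrite <- (mulVl (inv x)) at 1.
  rewrite <- mulA, (mulA (inv x)), mulVl, mul1l. apply mulVl.
Qed.
Lemma mul1r (x : G) : x · e = x.
Proof. rewrite <- (mulVl x), mulA, mulVr, mul1l. reflexivity. Qed.
Lemma inv_uniq (a b : G) : a · b = e -> inv a = b.
Proof. intro H. rewrite <- (mul1r (inv a)), <- H, mulA, mulVl, mul1l. reflexivity. Qed.
Lemma inv_inv (x : G) : inv (inv x) = x.
Proof. apply inv_uniq. apply mulVl. Qed.
Lemma inv_mul (x y : G) : inv (x · y) = inv y · inv x.
Proof. apply inv_uniq. rewrite <- !mulA, (mulA y), mulVr, mul1l, mulVr. reflexivity. Qed.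
Lemma inv1 : inv e = e.
Proof. apply inv_uniq. apply mul1l. Qed.
Lemma mulKV (x y : G) : inv x · (x · y) = y.
Proof. rewrite mulA, mulVl, mul1l. reflexivity. Qed.
Lemma mulVK (x y : G) : x · (inv x · y) = y.
Proof. rewrite mulA, mulVr, mul1l. reflexivity. Qed.

Ltac gsimpl := unfold conjg, comm in *;
  repeat (progress (rewrite ?inv_mul, ?inv_inv, ?inv1, ?mul1l, ?mul1r, ?mulVr, ?mulVl, ?mulKV, ?mulVK;
          rewrite <- ?mulA)).

Lemma cancel_l (a b c : G) : a · b = a · c -> b = c.
Proof. intro H. rewrite <- (mulKV a b), H. gsimpl. reflexivity. Qed.

Lemma conj_mul (a b g : G) : conjg G (a · b) g = conjg G a g · conjg G b g.
Proof. gsimpl. reflexivity. Qed.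
Lemma conj_inv (a g : G) : conjg G (inv a) g = inv (conjg G a g).
Proof. gsimpl. reflexivity. Qed.
Lemma conj_e (g : G) : conjg G e g = e.
Proof. gsimpl. reflexivity. Qed.
Lemma conj_conj (x g h : G) : conjg G (conjg G x g) h = conjg G x (g · h).
Proof. gsimpl. reflexivity. Qed.
Lemma conj_1 (x : G) : conjg G x e = x.
Proof. gsimpl. reflexivity. Qed.
Lemma comm_conj (a b g : G) : conjg G (comm G a b) g = comm G (conjg G a g) (conjg G b g).
Proof. gsimpl. reflexivity. Qed.

Definition sub (A B : G -> Prop) := forall g, A g -> B g.

Lemma gen_incl (S : G -> Prop) g : S g -> gen G S g.
Proof. intros Hs H _ Hsub. apply Hsub, Hs. Qed.
Lemma gen_subgroup (S : G -> Prop) : subgroup G (gen G S).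
Proof.
  split; [|split].
  - intros H [H1 _] _. exact H1.
  - intros x y Hx Hy H HH Hsub. pose proof HH as (_ & Hm & _). apply Hm; [apply Hx|apply Hy]; auto.
  - intros x Hx H HH Hsub. pose proof HH as (_ & _ & Hi). apply Hi, Hx; auto.
Qed.
Lemma gen_min (S T : G -> Prop) : subgroup G T -> sub S T -> sub (gen G S) T.
Proof. intros HT HS g Hg. apply Hg; auto. Qed.
Lemma gen_mono (S T : G -> Prop) : sub S T -> sub (gen G S) (gen G T).
Proof. intros HST. apply gen_min. apply gen_subgroup. intros g Hg. apply gen_incl, HST, Hg. Qed.
Lemma derived_mono (A B : G -> Prop) : sub A B -> sub (derived G A) (derived G B).
Proof.
  intros HAB. apply gen_mono. intros g (a & b & Ha & Hb & ->). exists a, b; auto.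
Qed.

Fixpoint it (n : nat) (A : G -> Prop) : G -> Prop :=
  match n with 0 => A | S m => derived G (it m A) end.
Lemma it_mono n A B : sub A B -> sub (it n A) (it n B).
Proof. induction n; simpl; intros; auto. apply derived_mono; auto. Qed.
Lemma it_shift n A : it n (derived G A) = derived G (it n A).
Proof. induction n; simpl; auto. rewrite IHn. reflexivity. Qed.
Lemma it_ds n : it n (fun _ => True) = derived_series G n.
Proof. induction n; simpl; auto. rewrite IHn. reflexivity. Qed.

Lemma gpow_add (x : G) a b : gpow G x (a + b) = gpow G x a · gpow G x b.
Proof. induction a; simpl. - rewrite mul1l; auto. - rewrite IHa, mulA. auto. Qed.
Lemma gpow_mul (x : G) a b : gpow G x (a * b) = gpow G (gpow G x a) b.
Proof.
  induction b; simpl. - rewrite Nat.mul_0_r. auto.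
  - rewrite Nat.mul_succ_r, Nat.add_comm, gpow_add, IHb. auto.
Qed.
Lemma gpow_e n : gpow G e n = e.
Proof. induction n; simpl; auto. rewrite IHn, mul1l. auto. Qed.
Lemma gpow_mul_one (x : G) k m : gpow G x k = e -> gpow G x (k * m) = e.
Proof. intro H. rewrite gpow_mul, H. apply gpow_e. Qed.
Lemma sub_pow (H : G -> Prop) : subgroup G H -> forall x n, H x -> H (gpow G x n).
Proof. intros (H1 & Hm & Hi) x n Hx. induction n; simpl; auto. Qed.
Lemma conj_pow (x g : G) n : conjg G (gpow G x n) g = gpow G (conjg G x g) n.
Proof. induction n; simpl. - apply conj_e. - rewrite conj_mul, IHn. auto. Qed.
Lemma sub_conj (H : G -> Prop) : subgroup G H -> forall x g, H x -> H g -> H (conjg G x g).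
Proof. intros (H1 & Hm & Hi) x g Hx Hg. unfold conjg. auto. Qed.
End GL.
Ltac gsimpl := unfold conjg, comm in *;
  repeat (progress (rewrite ?inv_mul, ?inv_inv, ?inv1, ?mul1l, ?mul1r, ?mulVr, ?mulVl, ?mulKV, ?mulVK;
          rewrite <- ?mulA)).

Section Dietz.
Variable G : Group.
Local Notation "x · y" := (gmul G x y) (at level 40, left associativity).
Local Notation e := (gone G).
Local Notation inv := (ginv G).

Definition deq (x y : G) : {x = y} + {x <> y} := excluded_middle_informative (x = y).
Definition prod (w : list G) : G := fold_right (gmul G) e w.
Lemma prod_app w1 w2 : prod (w1 ++ w2) = prod w1 · prod w2.
Proof. induction w1; simpl. - rewrite mul1l. auto. - rewrite IHw1, mulA. auto. Qed.
Lemma prod_repeat y n : prod (repeat y n) = gpow G y n.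
Proof. induction n; simpl; congruence. Qed.

Lemma filter_len_cnt (w : list G) y :
  length w = count_occ deq w y + length (filter (fun z => if deq z y then false else true) w).
Proof. induction w; simpl; auto. destruct (deq a y); simpl; lia. Qed.
Lemma filter_cnt (w : list G) y y' :
  count_occ deq (filter (fun z => if deq z y then false else true) w) y' <= count_occ deq w y'.
Proof. induction w; simpl; auto. destruct (deq a y); simpl; destruct (deq a y'); lia. Qed.

Lemma pigeon (k : nat) : forall (m w : list G), (forall z, In z w -> In z m) ->
  (forall y, In y m -> count_occ deq w y <= k) -> length w <= k * length m.
Proof.
  induction m as [|y m IH]; intros w Hin Hc.
  - destruct w as [|z w]; simpl; [lia|]. exfalso. apply (Hin z); left; auto.
  - rewrite (filter_len_cnt w y).
    assert (Hin' : forall z, In z (filter (fun z => if deq z y then false else true) w) -> In z m).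
    { intros z Hz. apply filter_In in Hz as [Hz Hd]. destruct (deq z y); try discriminate.
      destruct (Hin z Hz); auto. congruence. }
    specialize (IH _ Hin' (fun y' Hy' => Nat.le_trans _ _ _ (filter_cnt w y y') (Hc y' (or_intror Hy')))).
    pose proof (Hc y (or_introl eq_refl)). simpl. lia.
Qed.

Fixpoint words (m : list G) (L : nat) : list (list G) :=
  match L with 0 => [[]] | S L' => flat_map (fun z => map (cons z) (words m L')) m end.
Lemma flat_len (W : list (list G)) (m0 : list G) :
  length (flat_map (fun z => map (cons z) W) m0) = length m0 * length W.
Proof. induction m0; simpl; auto. rewrite length_app, length_map, IHm0. lia. Qed.
Lemma words_len m L : length (words m L) = length m ^ L.
Proof. induction L; simpl; auto. rewrite flat_len, IHL. auto. Qed.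
Lemma words_in m : forall L w, length w = L -> Forall (fun z => In z m) w -> In w (words m L).
Proof.
  induction L; destruct w; simpl; intros Hl F; try discriminate.
  - left; auto.
  - inversion F; subst. apply in_flat_map. exists c. split; auto. apply in_map. apply IHL; auto.
Qed.

Lemma pow_cycle (c : G) (P : list G) : (forall j, In (gpow G c j) P) ->
  exists k, 1 <= k <= length P /\ gpow G c k = e.
Proof.
  intros HP. apply NNPP; intro Hn.
  assert (ND: NoDup (map (gpow G c) (seq 0 (S (length P))))).
  { apply NoDup_map_NoDup_ForallPairs; [|apply seq_NoDup].
    intros i j Hi Hj Eij. apply in_seq in Hi, Hj.
    destruct (lt_eq_lt_dec i j) as [[Hlt|Heq]|Hlt]; auto; exfalso; apply Hn.
    - exists (j - i). split. lia. apply (cancel_l _ (gpow G c i)).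
      rewrite <- gpow_add, mul1r. replace (i + (j-i)) with j by lia. auto.
    - exists (i - j). split. lia. apply (cancel_l _ (gpow G c j)).
      rewrite <- gpow_add, mul1r. replace (j + (i-j)) with i by lia. auto. }
  assert (Hinc : incl (map (gpow G c) (seq 0 (S (length P)))) P).
  { intros z Hz. apply in_map_iff in Hz as (j & <- & _). apply HP. }
  pose proof (NoDup_incl_length ND Hinc) as Hle. rewrite length_map, length_seq in Hle. lia.
Qed.

Lemma fact_div k N : 1 <= k <= N -> exists m, fact N = k * m.
Proof.
  induction N; intros Hk. lia.
  destruct (Nat.eq_dec k (S N)) as [->|Hne].
  - exists (fact N). reflexivity.
  - destruct IHN as [m Hm]. lia. exists (S N * m). change (fact (S N)) with (S N * fact N).
    rewrite Hm. ring.
Qed.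

Variable H : G -> Prop. Hypothesis HH : subgroup G H.
Variable x : G. Hypothesis Hx : H x.
Variable r : nat. Hypothesis Hr : 0 < r. Hypothesis Hxr : gpow G x r = e.
Variable s : nat.
Variable l : list G. Hypothesis Hls : length l <= s.
Hypothesis Hl : forall g, H g -> In (conjg G x g) l.
Definition Sx y := exists g, H g /\ y = conjg G x g.

Lemma S_H y : Sx y -> H y.
Proof. intros (g & Hg & ->). apply sub_conj; auto. Qed.
Lemma S_in y : Sx y -> In y l.
Proof. intros (g & Hg & ->). auto. Qed.
Lemma S_pow y : Sx y -> gpow G y r = e.
Proof. intros (g & Hg & ->). rewrite <- conj_pow, Hxr. apply conj_e. Qed.
Lemma S_conj y m : Sx y -> H m -> Sx (conjg G y m).
Proof.
  intros (g & Hg & ->) Hm. exists (g · m). split. destruct HH as (_ & Hmul & _). auto.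
  apply conj_conj.
Qed.

Lemma collect y : Sx y -> forall w, Forall Sx w -> exists w', Forall Sx w' /\
  length w' + count_occ deq w y = length w /\
  prod w = gpow G y (count_occ deq w y) · prod w'.
Proof.
  intros Sy. induction w as [|z w IH]; intros Fw.
  - exists []. simpl. split; auto. split; auto. rewrite mul1l. auto.
  - inversion Fw as [|? ? Sz Fw']; subst. destruct (IH Fw') as (w1 & F1 & L1 & P1).
    simpl. destruct (deq z y) as [->|Hne].
    + exists w1. split; auto. split; [simpl; lia|]. simpl. rewrite P1, mulA. reflexivity.
    + exists (conjg G z (gpow G y (count_occ deq w y)) :: w1). split.
      * constructor; auto. apply S_conj; auto. apply sub_pow; auto. apply S_H; auto.
      * split. simpl. lia. simpl. rewrite P1. gsimpl. reflexivity.
Qed.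

Lemma reduce : forall n w, length w <= n -> Forall Sx w ->
  exists w', Forall Sx w' /\ length w' <= (r-1) * length l /\ prod w' = prod w.
Proof.
  induction n; intros w Hlen Fw.
  - destruct w; simpl in Hlen; [|lia]. exists []. simpl. split; auto. split; auto. apply Nat.le_0_l.
  - destruct (classic (exists y, In y l /\ r <= count_occ deq w y)) as [(y & Hy & Hc)|Hno].
    + assert (Sy : Sx y).
      { assert (In y w) by (apply (count_occ_In deq); lia). rewrite Forall_forall in Fw. auto. }
      destruct (collect y Sy w Fw) as (w1 & F1 & L1 & P1).
      destruct (IHn (repeat y (count_occ deq w y - r) ++ w1)) as (w2 & F2 & L2 & P2).
      * rewrite length_app, repeat_length. lia.
      * apply Forall_app. split; auto. apply Forall_forall. intros z Hz. apply repeat_spec in Hz. subst; auto.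
      * exists w2. split; auto. split; auto. rewrite P2, P1, prod_app, prod_repeat.
        assert (Ec : count_occ deq w y = count_occ deq w y - r + r) by lia.
        rewrite Ec at 2. rewrite gpow_add, S_pow, mul1r; auto.
    + exists w. split; auto. split; auto. apply pigeon.
      * intros z Hz. apply S_in. rewrite Forall_forall in Fw. auto.
      * intros y Hy. destruct (le_lt_dec r (count_occ deq w y)); [exfalso; apply Hno; eauto | lia].
Qed.

Definition prods := map prod (words (e :: l) ((r-1)*s)).

Lemma in_prods w : Forall Sx w -> In (prod w) prods.
Proof.
  intros Fw. destruct (reduce (length w) w (le_n _) Fw) as (w' & F' & L' & P').
  rewrite <- P'. rewrite <- (mul1r _ (prod w')).
  rewrite <- (gpow_e _ ((r-1)*s - length w')), <- prod_repeat, <- prod_app.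
  apply in_map. apply words_in.
  - rewrite length_app, repeat_length. assert ((r-1)*length l <= (r-1)*s) by (apply Nat.mul_le_mono_l; auto). lia.
  - apply Forall_app. split.
    + rewrite Forall_forall in *. intros z Hz. right. apply S_in; auto.
    + apply Forall_forall. intros z Hz. apply repeat_spec in Hz. left; auto.
Qed.

Lemma prods_len : length prods <= S s ^ ((r-1)*s).
Proof. unfold prods. rewrite length_map, words_len. simpl. apply Nat.pow_le_mono_l. lia. Qed.

Lemma dietz a b : Sx a -> H b -> gpow G (comm G a b) (fact (S s ^ ((r-1)*s))) = e.
Proof.
  intros Sa Hb.
  set (wc := repeat a (r-1) ++ [conjg G a b]).
  assert (Fc : Forall Sx wc).
  { apply Forall_app. split. apply Forall_forall. intros z Hz. apply repeat_spec in Hz. subst; auto.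
    constructor; auto. apply S_conj; auto. }
  assert (Pc : prod wc = comm G a b).
  { assert (Ia : inv a = gpow G a (r-1)).
    { apply inv_uniq. change (gpow G a (S (r-1)) = e). replace (S (r-1)) with r by lia. apply S_pow; auto. }
    unfold wc. rewrite prod_app, prod_repeat, <- Ia. simpl. gsimpl. reflexivity. }
  assert (Pj : forall j, exists wj, Forall Sx wj /\ prod wj = gpow G (comm G a b) j).
  { induction j. exists []. simpl; auto. destruct IHj as (wj & Fj & Pj).
    exists (wc ++ wj). split. apply Forall_app; auto. rewrite prod_app, Pc, Pj. reflexivity. }
  destruct (pow_cycle (comm G a b) prods) as (k & Hk & Ek).
  { intros j. destruct (Pj j) as (wj & Fj & <-). apply in_prods; auto. }
  pose proof prods_len.
  destruct (fact_div k (S s ^ ((r-1)*s))) as [m ->]. lia.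
  apply gpow_mul_one. auto.
Qed.
End Dietz.

Lemma gpow_comm (G : Group) (x : G) n : gmul G (gpow G x n) x = gmul G x (gpow G x n).
Proof.
  change (gmul G x (gpow G x n)) with (gpow G x (S n)).
  rewrite <- (mul1r G x) at 2. change (gmul G x (gone G)) with (gpow G x 1).
  rewrite <- gpow_add. f_equal. lia.
Qed.
Lemma gpow_inv (G : Group) (x : G) n : gpow G (ginv G x) n = ginv G (gpow G x n).
Proof.
  induction n; simpl. - rewrite inv1; auto.
  - rewrite IHn, inv_mul, <- !inv_mul, gpow_comm. reflexivity.
Qed.

Section Main.
Variable G : Group.
Local Notation "x · y" := (gmul G x y) (at level 40, left associativity).
Local Notation e := (gone G).
Local Notation inv := (ginv G).
Variable X : G -> Prop.
Definition HX := gen G X.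
Definition Y y := exists x h, X x /\ HX h /\ y = conjg G x h.
Definition X' c := exists a b, Y a /\ Y b /\ c = comm G a b.
Definition N := gen G X'.

Lemma HH : subgroup G HX. Proof. apply gen_subgroup. Qed.
Lemma X_H x : X x -> HX x. Proof. apply gen_incl. Qed.
Lemma Y_H y : Y y -> HX y.
Proof. intros (x & h & Hx & Hh & ->). apply sub_conj; auto using HH, X_H. Qed.
Lemma X_Y x : X x -> Y x.
Proof. intros Hx. exists x, e. split; auto. split. apply HH. symmetry; apply conj_1. Qed.
Lemma N_H : sub G N HX.
Proof.
  apply gen_min. apply HH. intros c (a & b & Ha & Hb & ->). apply Y_H in Ha, Hb.
  pose proof HH as (H1 & Hm & Hi). unfold comm. auto.
Qed.
Lemma N_derived : sub G N (derived G HX).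
Proof. apply gen_mono. intros c (a & b & Ha & Hb & ->). exists a, b. auto using Y_H. Qed.
Lemma NN : subgroup G N. Proof. apply gen_subgroup. Qed.
Lemma N_normal n g : N n -> HX g -> N (conjg G n g).
Proof.
  intros Hn. revert g. pattern n. apply (gen_min G X'); auto.
  - pose proof NN as (N1 & Nm & Ni). split; [|split].
    + intros g _. rewrite conj_e. auto.
    + intros a b Ha Hb g Hg. rewrite conj_mul. auto.
    + intros a Ha g Hg. rewrite conj_inv. auto.
  - intros c (a & b & (x & h & Hx & Hh & ->) & (x' & h' & Hx' & Hh' & ->) & ->) g Hg.
    apply gen_incl. rewrite comm_conj, !conj_conj. pose proof HH as (H1 & Hm & Hi).
    exists (conjg G x (h · g)), (conjg G x' (h' · g)). split; [|split]; auto.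
    + exists x, (h · g). auto.
    + exists x', (h' · g). auto.
Qed.

Definition eqv a b := N (a · inv b).
Lemma eqv_refl a : eqv a a. Proof. unfold eqv. rewrite mulVr. apply NN. Qed.
Lemma eqv_sym a b : eqv a b -> eqv b a.
Proof. unfold eqv. intros Hab. replace (b · inv a) with (inv (a · inv b)) by (gsimpl; reflexivity). pose proof NN as (N1 & Nm & Ni). auto. Qed.
Lemma eqv_trans a b c : eqv a b -> eqv b c -> eqv a c.
Proof. unfold eqv. intros H1 H2. replace (a · inv c) with ((a · inv b) · (b · inv c)) by (gsimpl; reflexivity). pose proof NN as (N1 & Nm & Ni). auto. Qed.
Lemma eqv_mulr a b c : eqv a b -> eqv (a · c) (b · c).
Proof. unfold eqv. intros H1. replace (a · c · inv (b · c)) with (a · inv b) by (gsimpl; reflexivity). auto. Qed.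
Lemma eqv_mull a b c : HX c -> eqv a b -> eqv (c · a) (c · b).
Proof.
  unfold eqv. intros Hc H1. replace (c · a · inv (c · b)) with (conjg G (a · inv b) (inv c)) by (gsimpl; reflexivity).
  apply N_normal; auto. apply HH; auto.
Qed.
Lemma eqv_of a b c : HX b -> N c -> a = b · c -> eqv a b.
Proof.
  unfold eqv. intros Hb Hc ->. replace (b · c · inv b) with (conjg G c (inv b)) by (gsimpl; reflexivity).
  apply N_normal; auto. apply HH; auto.
Qed.
Lemma eqv_e a : eqv a e <-> N a.
Proof. unfold eqv. rewrite inv1, mul1r. tauto. Qed.

Lemma T_subgroup (P : G -> Prop) : sub G P HX ->
  subgroup G (fun g => HX g /\ forall y, P y -> eqv (y · g) (g · y)).
Proof.
  intros HP. pose proof HH as (H1 & Hm & Hi). split; [|split].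
  - split; auto. intros y _. rewrite mul1l, mul1r. apply eqv_refl.
  - intros g k (Hg & Tg) (Hk & Tk). split; auto. intros y Py.
    rewrite mulA. apply eqv_trans with (g · y · k). apply eqv_mulr; auto.
    rewrite <- !mulA. apply eqv_mull; auto.
  - intros g (Hg & Tg). split; auto. intros y Py.
    assert (E1 : eqv (inv g · (g · y)) (inv g · (y · g))) by (apply eqv_mull; auto; apply eqv_sym; auto).
    rewrite mulKV in E1. apply eqv_mulr with (c := inv g) in E1.
    replace (inv g · (y · g) · inv g) with (inv g · y) in E1 by (gsimpl; reflexivity). auto.
Qed.

Lemma commY : sub G HX (fun g => HX g /\ forall y, Y y -> eqv (y · g) (g · y)).
Proof.
  apply (gen_min G X). apply T_subgroup. intros g; apply Y_H.
  intros x Hx. split. apply X_H; auto. intros y Hy.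
  apply eqv_of with (comm G y x).
  - pose proof HH as (H1 & Hm & Hi). apply Hm; auto using X_H, Y_H.
  - apply gen_incl. exists y, x. auto using X_Y.
  - gsimpl. reflexivity.
Qed.
Lemma commH : sub G HX (fun g => HX g /\ forall y, HX y -> eqv (y · g) (g · y)).
Proof.
  apply (gen_min G X). apply T_subgroup. intros g; auto.
  intros x Hx. split. apply X_H; auto. intros y Hy.
  apply eqv_sym. apply commY; auto. apply X_Y; auto.
Qed.
Lemma pow_mul_eqv g h k : HX g -> HX h -> eqv (gpow G (g · h) k) (gpow G g k · gpow G h k).
Proof.
  intros Hg Hh. pose proof HH as (H1 & Hm & Hi). induction k; simpl.
  - rewrite mul1l. apply eqv_refl.
  - apply eqv_trans with (g · h · (gpow G g k · gpow G h k)).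
    + apply eqv_mull; auto.
    + replace (g · h · (gpow G g k · gpow G h k)) with (g · (h · gpow G g k) · gpow G h k) by (rewrite !mulA; auto).
      replace (g · gpow G g k · (h · gpow G h k)) with (g · (gpow G g k · h) · gpow G h k) by (rewrite !mulA; auto).
      apply eqv_mulr, eqv_mull; auto. apply (proj2 (commH (gpow G g k) (sub_pow _ _ HH g k Hg))); auto.
Qed.

Variable r : nat.
Hypothesis Hxr : forall x, X x -> gpow G x r = e.
Lemma pow_r : sub G HX (fun h => HX h /\ N (gpow G h r)).
Proof.
  pose proof HH as (H1 & Hm & Hi). pose proof NN as (N1 & Nm & Ni).
  apply (gen_min G X).
  - split; [|split].
    + split; auto. rewrite gpow_e; auto.
    + intros g h (Hg & Ng) (Hh & Nh). split; auto. apply eqv_e.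
      apply eqv_trans with (gpow G g r · gpow G h r). apply pow_mul_eqv; auto.
      apply eqv_trans with (gpow G g r · e). apply eqv_mull; [apply (sub_pow _ _ HH); auto | apply eqv_e; auto].
      rewrite mul1r. apply eqv_e; auto.
    + intros g (Hg & Ng). split; auto. rewrite gpow_inv. auto.
  - intros x Hx. split. apply X_H; auto. rewrite Hxr; auto.
Qed.
End Main.

Fixpoint F (d r s : nat) : nat :=
  match d with 0 => 1 | S d' => r * F d' (fact (S s ^ ((r-1)*s))) (s*s) end.

Lemma main d : forall r s (G : Group) (X : G -> Prop), 0 < r ->
  (forall x, X x -> gpow G x r = gone G) ->
  (forall x, X x -> exists l : list G, length l <= s /\ forall h, gen G X h -> In (conjg G x h) l) ->
  (forall g, it G d (gen G X) g -> g = gone G) ->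
  forall g, gen G X g -> gpow G g (F d r s) = gone G.
Proof.
  induction d; intros r s G X Hr Hxr Hcl Htriv g Hg.
  - simpl in *. rewrite (Htriv g Hg). apply mul1l.
  - simpl F.
    assert (HN : forall c, gen G (X' G X) c -> gpow G c (F d (fact (S s ^ ((r-1)*s))) (s*s)) = gone G).
    { apply IHd.
      - apply lt_O_fact.
      - intros c (a & b & (x & h & Hx & Hh & ->) & Hb & ->).
        destruct (Hcl x Hx) as (l & Hl & Hin).
        apply (dietz G (HX G X) (HH G X) x (X_H G X x Hx) r Hr (Hxr x Hx) s l Hl Hin).
        + exists h; auto.
        + apply Y_H; auto.
      - intros c (a & b & (x & h & Hx & Hh & ->) & (x' & h' & Hx' & Hh' & ->) & ->).
        destruct (Hcl x Hx) as (l1 & Hl1 & Hin1). destruct (Hcl x' Hx') as (l2 & Hl2 & Hin2).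
        exists (map (fun p => comm G (fst p) (snd p)) (list_prod l1 l2)). split.
        + rewrite length_map, length_prod. apply Nat.mul_le_mono; auto.
        + intros g' Hg'. apply N_H in Hg'. rewrite comm_conj, !conj_conj.
          apply in_map_iff. exists (conjg G x (gmul G h g'), conjg G x' (gmul G h' g')). split; auto.
          pose proof (HH G X) as (H1 & Hm & Hi).
          apply in_prod; [apply Hin1 | apply Hin2]; apply Hm; auto.
      - intros c Hc. apply Htriv. simpl. rewrite <- it_shift. apply (it_mono G d (gen G (X' G X))); auto.
        apply N_derived. }
    rewrite gpow_mul. apply HN. apply (pow_r G X r Hxr g Hg).
Qed.

Lemma least (P : nat -> Prop) n : 0 < n -> P n ->
  exists e, (0 < e /\ P e /\ forall m, 0 < m -> P m -> e <= m) /\ e <= n.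
Proof.
  induction n as [n IH] using (well_founded_induction lt_wf). intros Hn Pn.
  destruct (classic (exists m, 0 < m /\ m < n /\ P m)) as [(m & Hm0 & Hmn & Pm)|Hno].
  - destruct (IH m Hmn Hm0 Pm) as (e & He & Hem). exists e. split; auto. lia.
  - exists n. split; [|lia]. split; auto. split; auto. intros m Hm Pm.
    destruct (le_lt_dec n m); auto. exfalso. apply Hno. eauto.
Qed.

Lemma F_pos d : forall r s, 0 < r -> 0 < F d r s.
Proof. induction d; simpl; intros. lia. apply Nat.mul_pos_pos; auto. apply IHd. apply lt_O_fact. Qed.

Theorem lemma2p6 :
  exists f : nat -> nat -> nat -> nat,
    forall (d r s : nat), 0 < d -> 0 < r -> 0 < s ->
    forall (G : Group) (X : G -> Prop),
      soluble_of_derived_length G d ->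
      generated_by G X ->
      (forall x, X x -> gpow G x r = gone G) ->
      (forall x, X x -> at_most_conjugates G x s) ->
      exists e, has_exponent G e /\ e <= f d r s.
Proof.
  exists F. intros d r s Hd Hr Hs G X Hsol Hgen Hxr Hcl.
  assert (Hall : forall g, gpow G g (F d r s) = gone G).
  { intros g. apply (main d r s G X Hr Hxr).
    - intros x Hx. destruct (Hcl x Hx) as (l & Hl & Hin). exists l; split; auto.
    - intros g' Hg'. apply (proj1 Hsol). rewrite <- it_ds.
      apply (it_mono G d (gen G X)); auto. intros ? ?; exact I.
    - apply Hgen. }
  destruct (least (fun n => forall g : G, gpow G g n = gone G) (F d r s) (F_pos d r s Hr) Hall)
    as (e & He & Hle).
  exists e. split; auto.
Qed.
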